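(* Let $M(1)^+_m$ denote the weight-$m$ subspace of $M(1)^+$. Then $M(1)^+_{10}$ (which has dimension 22) is spanned by the vectors in $$L(-1)M(1)^+_9,\qquad L(-3)M(1)^+_7,\qquad (h(-1)^4\mathbf 1)_{-3}\,h(-1)^4\mathbf 1,\qquad L(-2)^5\mathbf 1.$$
   Context: Let $\mathfrak h=\mathbb C h$ with $\langle h,h\rangle=1$, Heisenberg algebra $[h(m),h(n)]=m\delta_{m+n,0}$. Let $M(1)=\mathbb C[h(-1),h(-2),\dots]\mathbf 1$ be the Heisenberg vertex operator algebra of central charge 1 (vacuum $\mathbf 1$, $Y(h(-1)\mathbf 1,z)=\sum_nh(n)z^{-n-1}$, $Y(h(-n_1)\cdots h(-n_k)\mathbf 1,z)={:}\partial_z^{(n_1-1)}h(z)\cdots\partial_z^{(n_k-1)}h(z){:}$), with conformal vector $\omega=\frac12h(-1)^2\mathbf 1$, $Y(\omega,z)=\sum_nL(n)z^{-n-2}$, and weight of $h(-n_1)\cdots h(-n_k)\mathbf 1$ equal to $\sum n_i$. For $u\in M(1)$, $Y(u,z)=\sum_nu_nz^{-n-1}$. Let $\theta$ act by $(-1)^k$ on monomials of length $k$ and $M(1)^+$ be its fixed-point subalgebra (spanned by monomials of even length). *)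

(* Defs.v *)
(* The Heisenberg VOA M(1) of rank one, modelled as the
   commutative polynomial algebra C[x_0, x_1, x_2, ...] in countably many
   variables (multinomials' monoid algebra over commutative monomials
   {cmonom nat}); the variable x_i stands for h(-(i+1)), and the vacuum is 1. *)
From HB Require Import structures.
From mathcomp Require Import all_boot all_order all_algebra.
From mathcomp Require Import finmap.
From mathcomp Require Import monalg.

Set Implicit Arguments.
Unset Strict Implicit.
Unset Printing Implicit Defensive.

Import Order.TTheory GRing.Theory Num.Theory.
Local Open Scope ring_scope.

Section Heisenberg.
Variable C : numClosedFieldType.

Definition M1 := {malg C[{cmonom nat}]}.

Definition vac : M1 := 1.

(* h(-n) 1  (n >= 1), i.e. the variable x_(n-1) *)
Definition hv (n : nat) : M1 := << ucm (n.-1 : nat) >>.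

Definition wtm (k : {cmonom nat}) : nat :=
  (\sum_(i <- finsupp k) k i * i.+1)%N.

Definition lenm (k : {cmonom nat}) : nat := mdeg k.

Definition wtb (v : M1) : nat := (\max_(k <- msupp v) wtm k)%N.

Definition dx (i : nat) (v : M1) : M1 :=
  mmap (fun c : C => c%:MP)
       (fun k : {cmonom nat} => (k i)%:R *: << divcm k (ucm i) >>) v.

(* action of the Heisenberg mode h(m) on M(1):
   h(-n) = multiplication by h(-n) (n > 0),
   h(n) = n d/dh(-n) (n > 0), h(0) = 0 (zero momentum). *)
Definition hmode (m : int) (v : M1) : M1 :=
  if (m < 0)%R then hv `|m|%N * v
  else if m == 0 then 0
  else m%:~R *: dx (`|m|%N).-1 v.

(* normally ordered product :h(m_1) ... h(m_r): applied to v
   (annihilation modes act first, creation modes are multiplications) *)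
Fixpoint NO (ms : seq int) (v : M1) : M1 :=
  match ms with
  | [::] => v
  | m :: ms' =>
      if (m < 0)%R then hmode m (NO ms' v)
      else if m == 0 then 0
      else NO ms' (hmode m v)
  end.

Definition rangeZ (B : nat) : seq int :=
  [seq (i%:Z - B%:Z)%R | i <- iota 0 (B.*2.+1)].

Fixpoint tuplesZ (B : nat) (r : nat) : seq (seq int) :=
  match r with
  | 0 => [:: [::]]
  | r'.+1 => [seq m :: t | m <- rangeZ B, t <- tuplesZ B r']
  end.

Definition binomZ (a : int) (j : nat) : C :=
  (\prod_(i < j) (a - i%:Z)%:~R) / (j`!)%:R.

(* Modes of Y(u, z) = sum_n u_n z^(-n-1) for the monomial
   u = h(-n_1) ... h(-n_r) 1 (ns = [:: n_1; ...; n_r], all n_i >= 1):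
   Y(u,z) = :d^(n_1-1) h(z) ... d^(n_r-1) h(z):, with
   d^(j) h(z) = sum_m binom(-m-1, j) h(m) z^(-m-1-j), so that
   u_n = sum_{m_1+...+m_r = n+1-(n_1+...+n_r)}
            prod_i binom(-m_i-1, n_i-1) :h(m_1)...h(m_r):.
   Applied to v, all terms with some |m_i| > wtb v + |n| + sum n_i + 1
   vanish (annihilation modes of total degree > wtb v kill v, and the
   creation modes are then bounded by the constraint on the sum), so the
   infinite sum is the finite sum below. *)
Definition Ymono (ns : seq nat) (n : int) (v : M1) : M1 :=
  let B := (wtb v + `|n| + sumn ns + 1)%N in
  \sum_(ms <- tuplesZ B (size ns) | \sum_(m <- ms) m == n + 1 - (sumn ns)%:Z)
     (\prod_(p <- zip ms ns) binomZ (- p.1 - 1) (p.2.-1)) *: NO ms v.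

(* Virasoro operators: Y(omega, z) = sum_n L(n) z^(-n-2) with
   omega = 1/2 h(-1)^2 1, i.e. L(n) = omega_(n+1). *)
Definition Lop (n : int) (v : M1) : M1 :=
  (2%:R : C)^-1 *: Ymono [:: 1%N; 1%N] (n + 1) v.

Definition L2pow5vac : M1 := iter 5 (Lop (-2)) vac.

Definition h1pow4 : M1 := hv 1 ^+ 4.

Definition inMplus (m : nat) (v : M1) : Prop :=
  forall k, k \in msupp v -> wtm k = m /\ ~~ odd (lenm k).

Definition in_span (S : M1 -> Prop) (v : M1) : Prop :=
  exists s : seq (C * M1),
    (forall p, p \in s -> S p.2) /\ v = \sum_(p <- s) p.1 *: p.2.

Definition gens10 (v : M1) : Prop :=
  (exists w, inMplus 9 w /\ v = Lop (-1) w) \/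
  (exists w, inMplus 7 w /\ v = Lop (-3) w) \/
  v = Ymono [:: 1%N; 1%N; 1%N; 1%N] (-3) h1pow4 \/
  v = L2pow5vac.

End Heisenberg.

(* Main.v *)
Require Import Defs.
From Stdlib Require Import ZArith.
From HB Require Import structures.
From mathcomp Require Import all_boot all_order all_algebra.
From mathcomp Require Import finmap.
From mathcomp Require Import monalg.
From mathcomp Require Import zify ssrZ.
Delimit Scope nat_scope with N.
Delimit Scope Z_scope with Z.
Import GRing.Theory.
Local Open Scope ring_scope.

Set Implicit Arguments.
Unset Strict Implicit.
Unset Printing Implicit Defensive.


Local Open Scope fset_scope.

Lemma expcmnE (m : {cmonom nat}) a i : expcmn m a i = (m i * a)%N.
Proof.
case: a => [|a]; first by rewrite /expcmn /= onecmE muln0.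
rewrite /expcmn iteropS; elim: a => [|a IH]; first by rewrite /= muln1.
by rewrite iterS mulcmE IH !mulnS.
Qed.

Fixpoint monoF (j : nat) (e : seq nat) : {cmonom nat} :=
  match e with
  | [::] => onecm nat
  | a :: e' => mulcm (expcmn (ucm j) a) (monoF j.+1 e')
  end.
Definition mono e := monoF 0 e.

Lemma monoFE j e i : monoF j e i = if (i < j)%N then 0%N else nth 0%N e (i - j).
Proof.
elim: e j => [|a e IH] j /=; first by rewrite onecmE; case: ifP => // _; rewrite nth_nil.
rewrite mulcmE expcmnE ucmE IH eq_sym.
case: (ltngtP i j) => [lt|gt|->].
- by rewrite ltnS (ltnW lt).
- by rewrite ltnS leqNgt gt /= -(subnSK gt).
- by rewrite ltnSn subnn /= mul1n addn0.
Qed.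

Lemma monoE e i : mono e i = nth 0%N e i.
Proof. by rewrite /mono monoFE subn0. Qed.

Lemma wtmEw (k : {cmonom nat}) (d : {fset nat}) : finsupp k `<=` d ->
  wtm k = (\sum_(i <- d) k i * i.+1)%N.
Proof.
move=> le; rewrite /wtm (big_fset_incl _ le) //.
by move=> i _; rewrite -cmE_neq0 negbK => /eqP ->.
Qed.

Lemma wtmM (a b : {cmonom nat}) : wtm (mulcm a b) = (wtm a + wtm b)%N.
Proof.
rewrite (@wtmEw _ (finsupp a `|` finsupp b)); last first.
  by rewrite (_ : mulcm a b = @mmul _ a b) // mdomD.
rewrite (wtmEw (fsubsetUl _ (finsupp b))) (wtmEw (fsubsetUr (finsupp a) _)).
by rewrite -big_split /=; apply/eq_bigr=> /= i _; rewrite mulcmE mulnDl.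
Qed.

Lemma wtm1 : wtm (onecm nat) = 0%N.
Proof. by rewrite /wtm (_ : onecm nat = @mone _) // mdom1 big_seq_fset0. Qed.

Lemma wtmU i : wtm (ucm i) = i.+1.
Proof. by rewrite /wtm mdomU big_seq_fset1 ucmE eqxx mul1n. Qed.

Lemma wtmX m a : wtm (expcmn m a) = (wtm m * a)%N.
Proof.
case: a => [|a]; first by rewrite /expcmn /= wtm1 muln0.
rewrite /expcmn iteropS; elim: a => [|a IH]; first by rewrite /= muln1.
by rewrite iterS wtmM IH !mulnS.
Qed.

Fixpoint wtcF (j : nat) (e : seq nat) : nat :=
  match e with [::] => 0%N | a :: e' => (a * j.+1 + wtcF j.+1 e')%N end.
Definition wtc e := wtcF 0 e.

Lemma wtm_mono e : wtm (mono e) = wtc e.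
Proof.
rewrite /mono /wtc; elim: e 0%N => [|a e IH] j /=; first exact: wtm1.
by rewrite wtmM wtmX wtmU IH mulnC.
Qed.

Lemma lenmM (a b : {cmonom nat}) : lenm (mulcm a b) = (lenm a + lenm b)%N.
Proof. exact: (@mdegM nat a b). Qed.
Lemma lenm1 : lenm (onecm nat) = 0%N.
Proof. exact: (@mdeg1 nat). Qed.
Lemma lenmU i : lenm (ucm i) = 1%N.
Proof. exact: mdegU. Qed.
Lemma lenmX m a : lenm (expcmn m a) = (lenm m * a)%N.
Proof.
case: a => [|a]; first by rewrite /expcmn /= lenm1 muln0.
rewrite /expcmn iteropS; elim: a => [|a IH]; first by rewrite /= muln1.
by rewrite iterS lenmM IH !mulnS.
Qed.
Lemma lenm_mono e : lenm (mono e) = sumn e.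
Proof.
rewrite /mono; elim: e 0%N => [|a e IH] j /=; first exact: lenm1.
by rewrite lenmM lenmX lenmU IH mul1n.
Qed.

Local Close Scope fset_scope.


Definition cpoly := seq (Z * seq nat).

Fixpoint strip (e : seq nat) : seq nat :=
  match e with
  | [::] => [::]
  | a :: e' => let s := strip e' in if (a == 0%N) && (s == [::]) then [::] else a :: s
  end.

Lemma nth_strip e i : nth 0%N (strip e) i = nth 0%N e i.
Proof.
elim: e i => [|a e IH] i //=.
case: ifP => [/andP[/eqP -> /eqP s0]|_].
  by case: i => [|i] //=; rewrite -IH s0 nth_nil.
by case: i.
Qed.

Definition decr (e : seq nat) (i : nat) := strip (set_nth 0%N e i (nth 0%N e i).-1).

Definition mulxc (i : nat) (p : cpoly) : cpoly := [seq (t.1, incr_nth t.2 i) | t <- p].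
Definition dxc (i : nat) (p : cpoly) : cpoly :=
  [seq (Z.mul t.1 (Z.of_nat (nth 0%N t.2 i)), decr t.2 i) | t <- p & nth 0%N t.2 i != 0%N].
Definition scalec (z : Z) (p : cpoly) : cpoly := [seq (Z.mul z t.1, t.2) | t <- p].
Definition hmc (m : int) (p : cpoly) : cpoly :=
  match m with
  | Posz 0 => [::]
  | Posz n.+1 => scalec (Z.of_nat n.+1) (dxc n p)
  | Negz n => mulxc n p
  end.
Fixpoint NOc (ms : seq int) (p : cpoly) : cpoly :=
  match ms with
  | [::] => p
  | m :: ms' =>
    match m with
    | Negz _ => hmc m (NOc ms' p)
    | Posz 0 => [::]
    | Posz _ => NOc ms' (hmc m p)
    end
  end.

Section Interp.
Variable C : numClosedFieldType.
Local Notation M := (M1 C).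

Definition zr (z : Z) : C := (int_of_Z z)%:~R.
Lemma zrD a b : zr (Z.add a b) = zr a + zr b.
Proof. by rewrite /zr -intrD; congr intmul; lia. Qed.
Lemma zrM a b : zr (Z.mul a b) = zr a * zr b.
Proof. by rewrite /zr -intrM; congr intmul; lia. Qed.
Lemma zr_nat n : zr (Z.of_nat n) = n%:R.
Proof. by rewrite /zr (_ : int_of_Z _ = n%:Z) //; lia. Qed.
Lemma zr_int (m : int) : zr (Z_of_int m) = m%:~R.
Proof. by rewrite /zr (_ : int_of_Z _ = m) //; lia. Qed.

Definition interp (p : cpoly) : M := \sum_(t <- p) zr t.1 *: << mono t.2 >>.

Lemma interp_nil : interp [::] = 0.
Proof. by rewrite /interp big_nil. Qed.
Lemma interp_cons t p : interp (t :: p) = zr t.1 *: << mono t.2 >> + interp p.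
Proof. by rewrite /interp big_cons. Qed.
Lemma interp_cat p q : interp (p ++ q) = interp p + interp q.
Proof. by rewrite /interp big_cat. Qed.

Lemma scaleU (c : C) k : c *: (<< k >> : M) = << c *g k >>.
Proof. by rewrite malgZ_def /fgscale msuppU1 big_seq_fset1 mcoeffUU mulr1. Qed.

Lemma mulU (a b : {cmonom nat}) : (<< a >> : M) * << b >> = << mulcm a b >>.
Proof. by rewrite malgM_def fgmulUU mulr1. Qed.

Lemma mono_incr e i : mono (incr_nth e i) = mulcm (ucm i) (mono e).
Proof.
apply/eqP/cmP => j; rewrite mulcmE monoE ucmE nth_incr_nth monoE.
by [].
Qed.

Lemma mono_decr e i : (0 < nth 0%N e i)%N ->
  mono (decr e i) = divcm (mono e) (ucm i).
Proof.
move=> pos; apply/eqP/cmP => j; rewrite divcmE monoE ucmE /decr nth_strip monoE.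
rewrite nth_set_nth /=; case: eqP => [->|ne]; first by rewrite eqxx subn1.
by rewrite (introF eqP (nesym ne)) subn0.
Qed.

Lemma interp_mulx i p : interp (mulxc i p) = hv C i.+1 * interp p.
Proof.
rewrite /interp big_map mulr_sumr; apply: eq_bigr => t _.
by rewrite -scalerAr /hv /= mulU mono_incr.
Qed.

Lemma interp_scale z p : interp (scalec z p) = zr z *: interp p.
Proof.
rewrite /interp big_map scaler_sumr; apply: eq_bigr => t _.
by rewrite zrM scalerA.
Qed.

Definition fMP : {additive C -> M} := GRing.Additive.clone _ _ (mkmalgU (@mone {cmonom nat})) _.

Lemma dx_add i : {morph dx (C:=C) i : u v / u + v}.
Proof. by move=> u v; rewrite /dx; have := (mmapD (f := fMP)); move=> /= ->. Qed.

Lemma dx0 i : dx (C:=C) i 0 = 0.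
Proof. by rewrite /dx; have := (mmap0 (f := fMP)); move=> /= ->. Qed.

Lemma dx_sum i (I : Type) (r : seq I) (F : I -> M) :
  dx i (\sum_(x <- r) F x) = \sum_(x <- r) dx i (F x).
Proof.
elim: r => [|x r IH]; first by rewrite !big_nil dx0.
by rewrite !big_cons dx_add IH.
Qed.

Lemma dxU i (c : C) k :
  dx i (c *: (<< k >> : M)) = (c * (k i)%:R) *: << divcm k (ucm i) >>.
Proof.
rewrite scaleU /dx; have := (mmapU (f := fMP)); move=> /= ->.
by rewrite mul_malgC scalerA.
Qed.

Lemma interp_dx i p : interp (dxc i p) = dx i (interp p).
Proof.
rewrite /interp dx_sum big_map big_filter big_mkcond /=; apply: eq_bigr => t _.
rewrite dxU monoE; case: eqP => [->|/eqP ne]; first by rewrite mulr0 scale0r.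
by rewrite zrM zr_nat mono_decr // lt0n.
Qed.

End Interp.

Lemma interpE (C : numClosedFieldType) p : interp C p = \sum_(t <- p) zr C t.1 *: << mono t.2 >>.
Proof. by []. Qed.


Fixpoint sumi (l : seq int) : int := match l with [::] => 0 | a :: r => a + sumi r end.

Definition Yc (B k : nat) (n : int) (p : cpoly) : cpoly :=
  flatten [seq NOc ms p | ms <- tuplesZ B k & sumi ms == n + 1 - k%:Z].

Definition canon (p : cpoly) : bool :=
  uniq (map snd p) && all (fun t => negb (Z.eqb t.1 0) && (last 1%N t.2 != 0%N)) p.
Definition wtbc (p : cpoly) : nat := foldr maxn 0%N (map (fun t => wtc t.2) p).

Fixpoint add_term (t : Z * seq nat) (acc : cpoly) : cpoly :=
  match acc with
  | [::] => [:: t]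
  | t' :: r => if t'.2 == t.2 then (Z.add t'.1 t.1, t.2) :: r else t' :: add_term t r
  end.
Definition norm (p : cpoly) : cpoly :=
  filter (fun t => negb (Z.eqb t.1 0)) (foldr add_term [::] p).

Lemma mono_inj e e' : last 1%N e != 0%N -> last 1%N e' != 0%N -> mono e = mono e' -> e = e'.
Proof.
move=> he he' eq.
have nth_eq i : nth 0%N e i = nth 0%N e' i by rewrite -!monoE eq.
have key (a b : seq nat) : last 1%N b != 0%N -> (forall i, nth 0%N a i = nth 0%N b i) ->
    (size b <= size a)%N.
  move=> hb hab; case: b hb hab => [|x b] //= hb hab.
  rewrite leqNgt; apply/negP => lt.
  move: (hab (size b)); rewrite nth_default; last by rewrite -ltnS.
  move=> /esym h0; move: hb; rewrite /= (last_nth 0%N) ?h0 //.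
apply: (@eq_from_nth _ 0%N); last by move=> i _; exact: nth_eq.
by apply/eqP; rewrite eqn_leq (key _ _ he' nth_eq) (key _ _ he) // => i; rewrite nth_eq.
Qed.

Section NOsec.
Variable C : numClosedFieldType.
Local Notation M := (M1 C).
Local Notation interp := (@interp C).

Lemma NO_neg n ms (v : M) : NO (Negz n :: ms) v = hmode (Negz n) (NO ms v).
Proof. reflexivity. Qed.
Lemma NO_pos n ms (v : M) : NO (Posz n.+1 :: ms) v = NO ms (hmode (Posz n.+1) v).
Proof. reflexivity. Qed.
Lemma NO_zero ms (v : M) : NO (Posz 0 :: ms) v = 0.
Proof. reflexivity. Qed.
Lemma hmode_neg n (v : M) : hmode (Negz n) v = hv C n.+1 * v.
Proof. reflexivity. Qed.
Lemma hmode_pos n (v : M) : hmode (Posz n.+1) v = n.+1%:R *: dx n v.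
Proof. reflexivity. Qed.
Lemma hmode_zero (v : M) : hmode (Posz 0) v = 0.
Proof. reflexivity. Qed.

Lemma hmode_interp m p : hmode m (interp p) = interp (hmc m p).
Proof.
case: m => [[|n]|n].
- by rewrite hmode_zero interp_nil.
- by rewrite hmode_pos interp_scale interp_dx (zr_nat C n.+1).
- by rewrite hmode_neg interp_mulx.
Qed.

Lemma NO_interp ms p : NO ms (interp p) = interp (NOc ms p).
Proof.
elim: ms p => [|m ms IH] p //.
case: m => [[|n]|n].
- by rewrite NO_zero interp_nil.
- by rewrite NO_pos hmode_interp IH.
- by rewrite NO_neg IH hmode_interp.
Qed.

Lemma sumiE (ms : seq int) : \sum_(m <- ms) m = sumi ms.
Proof. by elim: ms => [|m ms IH]; rewrite ?big_nil ?big_cons ?IH. Qed.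

Lemma binomZ0 a : binomZ C a 0 = 1.
Proof. by rewrite /binomZ big_ord0 fact0 divr1. Qed.

Lemma prod_zip_nseq (ms : seq int) k :
  \prod_(q <- zip ms (nseq k 1%N)) binomZ C (- q.1 - 1) q.2.-1 = 1.
Proof.
elim: ms k => [|m ms IH] [|k] //=; rewrite ?big_nil //.
by rewrite big_cons IH binomZ0 mulr1.
Qed.

Lemma interp_flatten (T : Type) (s : seq T) (P : pred T) (f : T -> cpoly) :
  interp (flatten [seq f x | x <- s & P x]) = \sum_(x <- s | P x) interp (f x).
Proof.
elim: s => [|x s IH]; first by rewrite big_nil interp_nil.
rewrite big_cons /=; case: (P x) => //=.
by rewrite interp_cat IH.
Qed.

Lemma Ymono_interp k n p :
  Ymono (nseq k 1%N) n (interp p) =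
  interp (Yc (wtb (interp p) + `|n| + k + 1) k n p).
Proof.
rewrite /Ymono /Yc size_nseq sumn_nseq mul1n interp_flatten.
rewrite (eq_bigl (fun ms => sumi ms == n + 1 - k%:Z)); last first.
  by move=> ms /=; rewrite sumiE.
by apply: eq_bigr => ms _; rewrite prod_zip_nseq scale1r NO_interp.
Qed.

Lemma cU (k k' : {cmonom nat}) : (<<k>> : M)@_k' = (k == k')%:R.
Proof.
case: (eqVneq k k') => [->|ne]; first by rewrite mcoeffUU.
by rewrite mcoeff_outdom // msuppU1 in_fset1 eq_sym.
Qed.

Lemma coef_interp p k : (interp p)@_k = \sum_(t <- p) zr C t.1 * (mono t.2 == k)%:R.
Proof.
rewrite interpE raddf_sum; apply: eq_bigr => t _.
by rewrite /= mcoeffZ cU.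
Qed.

Lemma zr_eq0 c : (zr C c == 0) = Z.eqb c 0.
Proof.
rewrite /zr intr_eq0; apply/eqP/idP; lia.
Qed.

Lemma coef_notin p k : (forall t, t \in p -> mono t.2 != k) -> (interp p)@_k = 0.
Proof.
move=> h; rewrite coef_interp big_seq big1 // => t tp.
by rewrite (negbTE (h t tp)) mulr0.
Qed.

Lemma coef_canon p c e : canon p -> (c, e) \in p -> (interp p)@_(mono e) = zr C c.
Proof.
elim: p => [|[c0 e0] p IH] // cp0.
move: (cp0); rewrite /canon map_cons cons_uniq /= => /andP[/andP[ne0 u] /andP[/andP[z0 l0] al]].
have cp : canon p by rewrite /canon u al.
rewrite in_cons => /orP[/eqP [-> ->]|inp].
  rewrite coef_interp big_cons /= eqxx mulr1 -[RHS]addr0; congr (_ + _).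
  rewrite -coef_interp coef_notin // => t tp.
  apply/negP => /eqP eqm.
  have te : t.2 = e0.
    apply: (mono_inj _ _ eqm) => //.
    by move/allP: al => /(_ t tp) /andP[].
  by move: ne0; rewrite -te (map_f snd tp).
rewrite coef_interp big_cons /= -coef_interp (IH cp inp).
have -> : (mono e0 == mono e) = false.
  apply/negP => /eqP eqm.
  have te : e0 = e.
    apply: (mono_inj _ _ eqm) => //.
    by move/allP: al => /(_ _ inp) /andP[].
  by move: ne0; rewrite te (map_f snd inp).
by rewrite mulr0 add0r.
Qed.

Lemma msupp_canon p k : canon p ->
  (k \in msupp (interp p)) = (k \in map (fun t => mono t.2) p).
Proof.
move=> cp; apply/idP/idP.
  rewrite -mcoeff_neq0; apply: contraR => nk.
  apply/eqP/coef_notin => t tp; apply/negP => /eqP ek.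
  by move: nk; rewrite -ek (map_f (fun t => mono t.2) tp).
case/mapP => -[c e] tp ->; rewrite -mcoeff_neq0 (coef_canon cp tp) zr_eq0.
by move/andP: cp => [_ /allP /(_ _ tp) /andP[]].
Qed.

Lemma wtb_canon p : canon p -> wtb (interp p) = wtbc p.
Proof.
move=> cp; rewrite /wtb.
have pe : perm_eq (msupp (interp p)) (map (fun t => mono t.2) p).
  apply: uniq_perm; first exact: fset_uniq.
    rewrite (map_comp mono snd) map_inj_in_uniq; first by case/andP: cp.
    move=> e e' /mapP[t tp ->] /mapP[t' tp' ->].
    move/andP: cp => [_ /allP al].
    by apply: mono_inj; [case/andP: (al _ tp) | case/andP: (al _ tp')].
  by move=> k; rewrite msupp_canon.
rewrite (perm_big _ pe) big_map /wtbc.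
elim: p {cp pe} => [|t p IH]; first by rewrite big_nil.
by rewrite big_cons IH wtm_mono.
Qed.

Lemma Ymono_canon k n p W : canon p -> wtbc p = W ->
  Ymono (nseq k 1%N) n (interp p) = interp (Yc (W + `|n| + k + 1) k n p).
Proof. by move=> cp <-; rewrite Ymono_interp wtb_canon. Qed.

Lemma aux_add (a b c X : M) : c = b + a -> c + X = a + 0 + (b + X).
Proof. by move=> ->; rewrite addr0 addrA [b + a]addrC. Qed.
Lemma aux0 (a X : M) : a + 0 + X = a + X.
Proof. by rewrite addr0. Qed.
Lemma aux_add2 (a b Y X : M) : Y = a + X -> b + Y = a + 0 + (b + X).
Proof. by move=> ->; rewrite addr0 addrCA. Qed.

Lemma interp_add_term t acc : interp (add_term t acc) = interp [:: t] + interp acc.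
Proof.
elim: acc => [|t' acc IH] /=; first by rewrite interp_nil addr0.
case: eqP => [e|_].
  rewrite !interp_cons interp_nil; apply: aux_add.
  by rewrite e -scalerDl -zrD.
rewrite !interp_cons interp_nil; apply: aux_add2.
rewrite IH interp_cons interp_nil; exact: aux0.
Qed.

Lemma interp_norm p : interp (norm p) = interp p.
Proof.
rewrite /norm.
have -> : interp (filter (fun t => negb (Z.eqb t.1 0)) (foldr add_term [::] p)) =
          interp (foldr add_term [::] p).
  elim: (foldr add_term [::] p) => [|t q IH] //=.
  case: ifP => [_|/negbFE z]; first by rewrite !interp_cons IH.
  by rewrite interp_cons IH (_ : zr C t.1 = 0) ?scale0r ?add0r //; apply/eqP; rewrite zr_eq0.
elim: p => [|t p IH] //=.
by rewrite interp_add_term IH !interp_cons interp_nil aux0.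
Qed.

End NOsec.


Section Hom.
Variable C : numClosedFieldType.
Local Notation M := (M1 C).

Definition hom (w : int) (b : bool) (v : M) :=
  forall k, k \in msupp v -> (wtm k)%:Z = w /\ odd (lenm k) = b.

Lemma hom0 w b : hom w b 0.
Proof. by move=> k; rewrite msupp0 in_fset0. Qed.

Lemma homD w b u v : hom w b u -> hom w b v -> hom w b (u + v).
Proof.
move=> hu hv k /(fsubsetP (msuppD_le u v)); rewrite in_fsetU => /orP[/hu|/hv] //.
Qed.

Lemma homZ w b c v : hom w b v -> hom w b (c *: v).
Proof. by move=> hv k /(fsubsetP (msuppZ_le c v)) /hv. Qed.

Lemma hom_sum w b (I : Type) (r : seq I) (P : pred I) (F : I -> M) :
  (forall i, P i -> hom w b (F i)) -> hom w b (\sum_(i <- r | P i) F i).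
Proof.
move=> h; elim/big_ind: _ => //; [exact: hom0 | exact: homD].
Qed.

Lemma hom_sum_seq w b (I : eqType) (r : seq I) (P : pred I) (F : I -> M) :
  (forall i, i \in r -> P i -> hom w b (F i)) -> hom w b (\sum_(i <- r | P i) F i).
Proof.
move=> h; rewrite big_seq_cond; apply: hom_sum => i /andP[ir Pi]; exact: h.
Qed.

Lemma homU k : hom (wtm k)%:Z (odd (lenm k)) (<< k >> : M).
Proof. by move=> k'; rewrite msuppU1 in_fset1 => /eqP ->. Qed.

Lemma hom_mulhv w b n v : hom w b v -> hom (w + n.+1%:Z) (~~ b) (hv C n.+1 * v).
Proof.
move=> hv0 k /msuppM_le [k1 [k2 [k1in k2in ->]]].
move: k1in; rewrite /hv /= msuppU1 in_fset1 => /eqP ->.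
have [w2 b2] := hv0 _ k2in.
rewrite (_ : @mmul _ (ucm n) k2 = mulcm (ucm n) k2) //.
rewrite wtmM lenmM wtmU lenmU -w2 -b2; split; first by rewrite PoszD addrC.
by rewrite oddD.
Qed.

Lemma dx_sumE i (v : M) :
  dx i v = \sum_(k <- msupp v) v@_k *: ((k i)%:R *: << divcm k (ucm i) >>).
Proof. by rewrite /dx mmapE; apply: eq_bigr => k _; rewrite mul_malgC. Qed.

Lemma divcm_split (k : {cmonom nat}) i : (0 < k i)%N ->
  k = mulcm (ucm i) (divcm k (ucm i)).
Proof.
move=> pos; apply/eqP/cmP => j; rewrite mulcmE divcmE ucmE.
case: eqP => [<-|_]; last by rewrite subn0.
by rewrite add1n subn1 prednK.
Qed.

Lemma hom_dx w b i v : hom w b v -> hom (w - i.+1%:Z) (~~ b) (dx i v).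
Proof.
move=> hv0; rewrite dx_sumE; apply: hom_sum_seq => k kin _.
apply: homZ; case: (posnP (k i)) => [->|pos]; first by rewrite scale0r; exact: hom0.
apply: homZ => k'; rewrite msuppU1 in_fset1 => /eqP ->.
have [w2 b2] := hv0 _ kin.
move: w2 b2; rewrite {1 2}(divcm_split pos) wtmM lenmM wtmU lenmU.
rewrite (_ : @ucm (reverse_coercion _ _) i = ucm i) //.
move=> <- <-.
by split; [lia | rewrite oddD /= negbK].
Qed.

Lemma hom_hmode w b m v : hom w b v -> hom (w - m) (~~ b) (hmode m v).
Proof.
move=> hv0; case: m => [[|n]|n].
- by rewrite hmode_zero; exact: hom0.
- by rewrite hmode_pos; apply: homZ; exact: hom_dx.
- rewrite hmode_neg NegzE opprK; exact: hom_mulhv.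
Qed.

Lemma hom_NO w b ms v : hom w b v ->
  hom (w - sumi ms) (b (+) odd (size ms)) (NO ms v).
Proof.
elim: ms w b v => [|m ms IH] w b v hv0; first by rewrite /= subr0 addbF.
rewrite (_ : sumi (m :: ms) = m + sumi ms) // (_ : size (m :: ms) = (size ms).+1) //.
case: m => [[|n]|n].
- by rewrite NO_zero; exact: hom0.
- rewrite NO_pos => k kin.
  have := IH _ _ _ (hom_hmode (m:=Posz n.+1) hv0) k kin.
  rewrite (_ : w - (n.+1%:Z + sumi ms) = w - n.+1%:Z - sumi ms); last by rewrite opprD addrA.
  by rewrite (_ : b (+) odd (size ms).+1 = ~~ b (+) odd (size ms)) // /= addNb addbN.
- rewrite NO_neg => k kin.
  have := hom_hmode (m:=Negz n) (IH _ _ _ hv0) kin.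
  rewrite (_ : w - (Negz n + sumi ms) = w - sumi ms - Negz n); last by rewrite opprD addrA addrAC.
  by rewrite (_ : b (+) odd (size ms).+1 = ~~ (b (+) odd (size ms))) // /= addbN.
Qed.

Lemma size_tuplesZ B r ms : ms \in tuplesZ B r -> size ms = r.
Proof.
elim: r ms => [|r IH] ms; first by rewrite /= inE => /eqP ->.
by case/allpairsPdep => m [t [_ tin ->]] /=; rewrite (IH _ tin).
Qed.

Lemma hom_Ymono w b ns n v : hom w b v ->
  hom (w - (n + 1 - (sumn ns)%:Z)) (b (+) odd (size ns)) (Ymono ns n v).
Proof.
move=> hv0; rewrite /Ymono; apply: hom_sum_seq => ms msin /eqP sm.
apply: homZ; have := hom_NO (ms:=ms) hv0.
by rewrite -sumiE sm (size_tuplesZ msin).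
Qed.

Lemma hom_Lop w b n v : hom w b v -> hom (w - n) b (Lop n v).
Proof.
move=> hv0; rewrite /Lop; apply: homZ; have := hom_Ymono (ns:=[:: 1%N; 1%N]) (n:=n + 1) hv0.
rewrite /= addbF (_ : n + 1 + 1 - 2%:Z = n) //.
lia.
Qed.

Lemma inMplus_hom m v : inMplus m v <-> hom m%:Z false v.
Proof.
split=> h k kin; have [w o] := h k kin.
  by split; [rewrite w | apply/negbTE].
by split; [move: w => [] | rewrite o].
Qed.

Lemma hom_vac : hom 0 false (vac C).
Proof.
by move=> k; rewrite /vac (_ : 1 = << @mone {cmonom nat} >>) // msuppU1 in_fset1 => /eqP ->;
  rewrite (_ : @mone {cmonom nat} = onecm nat) // wtm1 lenm1.
Qed.

Lemma dxZ i c (v : M) : dx i (c *: v) = c *: dx i v.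
Proof.
case: (eqVneq c 0) => [->|c0]; first by rewrite !scale0r dx0.
rewrite !dx_sumE msuppZ (negbTE c0) scaler_sumr; apply: eq_bigr => k _.
by rewrite mcoeffZ [RHS]scalerA.
Qed.

Lemma hmodeZ m c (v : M) : hmode m (c *: v) = c *: hmode m v.
Proof.
case: m => [[|n]|n].
- by rewrite !hmode_zero scaler0.
- by rewrite !hmode_pos dxZ !scalerA mulrC.
- by rewrite !hmode_neg scalerAr.
Qed.

Lemma NOZ ms c (v : M) : NO ms (c *: v) = c *: NO ms v.
Proof.
elim: ms v => [|m ms IH] v //.
case: m => [[|n]|n].
- by rewrite !NO_zero scaler0.
- by rewrite NO_pos NO_pos hmodeZ; exact: IH.
- by rewrite NO_neg NO_neg (IH v) hmodeZ.
Qed.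

Lemma wtbZ c (v : M) : c != 0 -> wtb (c *: v) = wtb v.
Proof. by move=> c0; rewrite /wtb msuppZ (negbTE c0). Qed.

Lemma YmonoZ ns n c (v : M) : c != 0 -> Ymono ns n (c *: v) = c *: Ymono ns n v.
Proof.
move=> c0; rewrite /Ymono wtbZ // scaler_sumr; apply: eq_bigr => ms _.
by rewrite NOZ !scalerA mulrC.
Qed.

Lemma LopZ n c (v : M) : c != 0 -> Lop n (c *: v) = c *: Lop n v.
Proof. by move=> c0; rewrite /Lop (YmonoZ _ _ _ c0) scalerA [RHS]scalerA mulrC. Qed.

End Hom.


Fixpoint enumE (j len n : nat) : seq (seq nat) :=
  match len with
  | 0 => if n == 0%N then [:: [::]] else [::]
  | len'.+1 => flatten [seq [seq a :: t | t <- enumE j.+1 len' (n - a * j.+1)]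
                       | a <- iota 0 (n %/ j.+1).+1]
  end.

Lemma enumE_complete len j n e : size e = len -> wtcF j e = n -> e \in enumE j len n.
Proof.
elim: len j n e => [|len IH] j n [|a t] //.
- by move=> _ <-; rewrite /= inE.
- move=> [st] wt; apply/flatten_mapP; exists a.
    rewrite mem_iota /= add0n ltnS leq_divRL // -wt leq_addr //.
  apply/mapP; exists t => //; apply: IH => //.
  by rewrite -wt addKn.
Qed.

Definition E10 : seq (seq nat) :=
  [seq strip e | e <- enumE 0 10 10 & ~~ odd (sumn e)].

Lemma term_le_wtm (k : {cmonom nat}) i : (k i * i.+1 <= wtm k)%N.
Proof.
case: (posnP (k i)) => [->//|pos].
have iin : i \in finsupp k by rewrite -cmE_neq0 -lt0n.
rewrite /wtm (bigD1_seq i iin (fset_uniq _)) /=; exact: leq_addr.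
Qed.

Lemma mono_strip e : mono (strip e) = mono e.
Proof. by apply/eqP/cmP => i; rewrite !monoE nth_strip. Qed.

Lemma wt10_mono (k : {cmonom nat}) : wtm k = 10%N -> ~~ odd (lenm k) ->
  exists2 e, e \in E10 & k = mono e.
Proof.
move=> wk lk.
have z i : (10 <= i)%N -> k i = 0%N.
  move=> le; apply/eqP; rewrite -leqn0; apply/negP => /negP; rewrite -ltnNge => pos.
  have := term_le_wtm k i; rewrite wk; apply/negP; rewrite -ltnNge.
  by apply: (leq_trans (n := i.+1)); [rewrite ltnS | rewrite leq_pmull].
set e := [seq k i | i <- iota 0 10].
have ke : k = mono e.
  apply/eqP/cmP => i; rewrite monoE.
  case: (ltnP i 10) => [lt|ge].
    by rewrite (nth_map 0%N) ?size_iota // nth_iota.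
  by rewrite nth_default ?size_map ?size_iota // z.
exists (strip e); last by rewrite mono_strip.
apply/mapP; exists e => //; rewrite mem_filter; apply/andP; split.
  by rewrite -lenm_mono -ke.
apply: enumE_complete; first by rewrite size_map size_iota.
by rewrite -/(wtc e) -wtm_mono -ke.
Qed.


Definition P0 : cpoly := [:: (1%Z, [::])].
Definition stepc (P : cpoly) : cpoly :=
  norm (Yc (wtbc P + absz (-2 + 1) + 2 + 1) 2 (-2 + 1) P).
Definition Pp : cpoly := ssrnat.iter 5 stepc P0.
Definition Py : cpoly := norm (Yc (4 + absz (-3) + 4 + 1) 4 (-3) [:: (1%Z, [:: 4%N])]).
Definition gen1 (f : seq nat) : cpoly :=
  norm (Yc (wtc f + absz (-1 + 1) + 2 + 1) 2 (-1 + 1) [:: (1%Z, f)]).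
Definition gen3 (f : seq nat) : cpoly :=
  norm (Yc (wtc f + absz (-3 + 1) + 2 + 1) 2 (-3 + 1) [:: (1%Z, f)]).

Definition condw (w : nat) (t : Z * seq nat) : bool :=
  (last 1%N t.2 != 0%N) && (wtc t.2 == w) && ~~ odd (sumn t.2).

Definition dD (d : Z * seq nat * cpoly * cpoly * Z * Z) := d.1.1.1.1.1.
Definition de (d : Z * seq nat * cpoly * cpoly * Z * Z) := d.1.1.1.1.2.
Definition dt1 (d : Z * seq nat * cpoly * cpoly * Z * Z) := d.1.1.1.2.
Definition dt3 (d : Z * seq nat * cpoly * cpoly * Z * Z) := d.1.1.2.
Definition dap (d : Z * seq nat * cpoly * cpoly * Z * Z) := d.1.2.
Definition day (d : Z * seq nat * cpoly * cpoly * Z * Z) := d.2.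

Definition combo (pp py : cpoly) d : cpoly :=
  flatten [seq scalec t.1 (gen1 t.2) | t <- dt1 d] ++
  flatten [seq scalec t.1 (gen3 t.2) | t <- dt3 d] ++
  scalec (dap d) pp ++ scalec (day d) py.

Definition check1 (pp py : cpoly) d : bool :=
  negb (Z.eqb (dD d) 0) && all (condw 9) (dt1 d) && all (condw 7) (dt3 d) &&
  nilp (norm ((dD d, de d) :: scalec (-1)%Z (combo pp py d))).

Definition data : seq (Z * seq nat * cpoly * cpoly * Z * Z) := [::
  ((24576)%Z, [:: 1%N; 0%N; 0%N; 0%N; 0%N; 0%N; 0%N; 0%N; 1%N], [:: ((1500)%Z, [:: 1%N; 0%N; 0%N; 0%N; 0%N; 0%N; 0%N; 1%N]); ((-300)%Z, [:: 0%N; 1%N; 0%N; 0%N; 0%N; 0%N; 1%N]); ((116)%Z, [:: 0%N; 0%N; 1%N; 0%N; 0%N; 1%N]); ((-52)%Z, [:: 3%N; 0%N; 0%N; 0%N; 0%N; 1%N]); ((-60)%Z, [:: 0%N; 0%N; 0%N; 1%N; 1%N]); ((-60)%Z, [:: 2%N; 1%N; 0%N; 0%N; 1%N]); ((-60)%Z, [:: 2%N; 0%N; 1%N; 1%N]); ((-24)%Z, [:: 5%N; 0%N; 0%N; 1%N]); ((-36)%Z, [:: 4%N; 1%N; 1%N]); ((-3)%Z, [:: 7%N; 1%N])], [:: ((24)%Z, [:: 1%N; 0%N; 0%N; 0%N; 0%N; 1%N]); ((120)%Z, [:: 0%N; 1%N; 0%N; 0%N; 1%N]); ((-24)%Z,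 [:: 0%N; 0%N; 1%N; 1%N]); ((24)%Z, [:: 3%N; 0%N; 0%N; 1%N]); ((72)%Z, [:: 2%N; 1%N; 1%N]); ((12)%Z, [:: 5%N; 1%N])], (0)%Z, (3)%Z);
  ((3072)%Z, [:: 0%N; 1%N; 0%N; 0%N; 0%N; 0%N; 0%N; 1%N], [:: ((36)%Z, [:: 1%N; 0%N; 0%N; 0%N; 0%N; 0%N; 0%N; 1%N]); ((300)%Z, [:: 0%N; 1%N; 0%N; 0%N; 0%N; 0%N; 1%N]); ((-116)%Z, [:: 0%N; 0%N; 1%N; 0%N; 0%N; 1%N]); ((52)%Z, [:: 3%N; 0%N; 0%N; 0%N; 0%N; 1%N]); ((60)%Z, [:: 0%N; 0%N; 0%N; 1%N; 1%N]); ((60)%Z, [:: 2%N; 1%N; 0%N; 0%N; 1%N]); ((60)%Z, [:: 2%N; 0%N; 1%N; 1%N]); ((24)%Z, [:: 5%N; 0%N; 0%N; 1%N]); ((36)%Z, [:: 4%N; 1%N; 1%N]); ((3)%Z, [:: 7%N; 1%N])], [:: ((-24)%Z, [:: 1%N; 0%N; 0%N; 0%N; 0%N; 1%N]); ((-120)%Z, [:: 0%N; 1%N; 0%N; 0%N; 1%N]); ((24)%Z, [:: 0%N; 0%N; 1%N; 1%N]); ((-24)%Z, [:: 3%N; 0%N; 0%N; 1%N]); ((-72)%Z, [:: 2%N; 1%N; 1%N]); ((-12)%Z, [:: 5%N; 1%N])], (0)%Z, (-3)%Z);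
  ((6144)%Z, [:: 0%N; 0%N; 1%N; 0%N; 0%N; 0%N; 1%N], [:: ((-252)%Z, [:: 1%N; 0%N; 0%N; 0%N; 0%N; 0%N; 0%N; 1%N]); ((-564)%Z, [:: 0%N; 1%N; 0%N; 0%N; 0%N; 0%N; 1%N]); ((812)%Z, [:: 0%N; 0%N; 1%N; 0%N; 0%N; 1%N]); ((-364)%Z, [:: 3%N; 0%N; 0%N; 0%N; 0%N; 1%N]); ((-420)%Z, [:: 0%N; 0%N; 0%N; 1%N; 1%N]); ((-420)%Z, [:: 2%N; 1%N; 0%N; 0%N; 1%N]); ((-420)%Z, [:: 2%N; 0%N; 1%N; 1%N]); ((-168)%Z, [:: 5%N; 0%N; 0%N; 1%N]); ((-252)%Z, [:: 4%N; 1%N; 1%N]); ((-21)%Z, [:: 7%N; 1%N])], [:: ((168)%Z, [:: 1%N; 0%N; 0%N; 0%N; 0%N; 1%N]); ((840)%Z, [:: 0%N; 1%N; 0%N; 0%N; 1%N]); ((-168)%Z, [:: 0%N; 0%N; 1%N; 1%N]); ((168)%Z, [:: 3%N; 0%N; 0%N; 1%N]); ((504)%Z, [:: 2%N; 1%N; 1%N]); ((84)%Z, [:: 5%N; 1%N])], (0)%Z, (21)%Z);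
  ((8192)%Z, [:: 3%N; 0%N; 0%N; 0%N; 0%N; 0%N; 1%N], [:: ((1836)%Z, [:: 1%N; 0%N; 0%N; 0%N; 0%N; 0%N; 0%N; 1%N]); ((452)%Z, [:: 0%N; 1%N; 0%N; 0%N; 0%N; 0%N; 1%N]); ((-284)%Z, [:: 0%N; 0%N; 1%N; 0%N; 0%N; 1%N]); ((1116)%Z, [:: 3%N; 0%N; 0%N; 0%N; 0%N; 1%N]); ((500)%Z, [:: 0%N; 0%N; 0%N; 1%N; 1%N]); ((500)%Z, [:: 2%N; 1%N; 0%N; 0%N; 1%N]); ((500)%Z, [:: 2%N; 0%N; 1%N; 1%N]); ((200)%Z, [:: 5%N; 0%N; 0%N; 1%N]); ((300)%Z, [:: 4%N; 1%N; 1%N]); ((25)%Z, [:: 7%N; 1%N])], [:: ((-2248)%Z, [:: 1%N; 0%N; 0%N; 0%N; 0%N; 1%N]); ((-1000)%Z, [:: 0%N; 1%N; 0%N; 0%N; 1%N]); ((200)%Z, [:: 0%N; 0%N; 1%N; 1%N]); ((-200)%Z, [:: 3%N; 0%N; 0%N; 1%N]); ((-600)%Z, [:: 2%N; 1%N; 1%N]); ((-100)%Z, [:: 5%N; 1%N])], (0)%Z, (-25)%Z);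
  ((3072)%Z, [:: 0%N; 0%N; 0%N; 1%N; 0%N; 1%N], [:: ((252)%Z, [:: 1%N; 0%N; 0%N; 0%N; 0%N; 0%N; 0%N; 1%N]); ((564)%Z, [:: 0%N; 1%N; 0%N; 0%N; 0%N; 0%N; 1%N]); ((-300)%Z, [:: 0%N; 0%N; 1%N; 0%N; 0%N; 1%N]); ((364)%Z, [:: 3%N; 0%N; 0%N; 0%N; 0%N; 1%N]); ((420)%Z, [:: 0%N; 0%N; 0%N; 1%N; 1%N]); ((420)%Z, [:: 2%N; 1%N; 0%N; 0%N; 1%N]); ((420)%Z, [:: 2%N; 0%N; 1%N; 1%N]); ((168)%Z, [:: 5%N; 0%N; 0%N; 1%N]); ((252)%Z, [:: 4%N; 1%N; 1%N]); ((21)%Z, [:: 7%N; 1%N])], [:: ((-168)%Z, [:: 1%N; 0%N; 0%N; 0%N; 0%N; 1%N]); ((-840)%Z, [:: 0%N; 1%N; 0%N; 0%N; 1%N]); ((168)%Z, [:: 0%N; 0%N; 1%N; 1%N]); ((-168)%Z, [:: 3%N; 0%N; 0%N; 1%N]); ((-504)%Z, [:: 2%N; 1%N; 1%N]); ((-84)%Z, [:: 5%N; 1%N])], (0)%Z, (-21)%Z);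
  ((12288)%Z, [:: 2%N; 1%N; 0%N; 0%N; 0%N; 1%N], [:: ((-5508)%Z, [:: 1%N; 0%N; 0%N; 0%N; 0%N; 0%N; 0%N; 1%N]); ((-1356)%Z, [:: 0%N; 1%N; 0%N; 0%N; 0%N; 0%N; 1%N]); ((852)%Z, [:: 0%N; 0%N; 1%N; 0%N; 0%N; 1%N]); ((-1300)%Z, [:: 3%N; 0%N; 0%N; 0%N; 0%N; 1%N]); ((-1500)%Z, [:: 0%N; 0%N; 0%N; 1%N; 1%N]); ((-1500)%Z, [:: 2%N; 1%N; 0%N; 0%N; 1%N]); ((-1500)%Z, [:: 2%N; 0%N; 1%N; 1%N]); ((-600)%Z, [:: 5%N; 0%N; 0%N; 1%N]); ((-900)%Z, [:: 4%N; 1%N; 1%N]); ((-75)%Z, [:: 7%N; 1%N])], [:: ((6744)%Z, [:: 1%N; 0%N; 0%N; 0%N; 0%N; 1%N]); ((3000)%Z, [:: 0%N; 1%N; 0%N; 0%N; 1%N]); ((-600)%Z, [:: 0%N; 0%N; 1%N; 1%N]); ((600)%Z, [:: 3%N; 0%N; 0%N; 1%N]); ((1800)%Z, [:: 2%N; 1%N; 1%N]); ((300)%Z, [:: 5%N; 1%N])], (0)%Z, (75)%Z);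
  ((12288)%Z, [:: 0%N; 0%N; 0%N; 0%N; 2%N], [:: ((-1260)%Z, [:: 1%N; 0%N; 0%N; 0%N; 0%N; 0%N; 0%N; 1%N]); ((-2820)%Z, [:: 0%N; 1%N; 0%N; 0%N; 0%N; 0%N; 1%N]); ((1500)%Z, [:: 0%N; 0%N; 1%N; 0%N; 0%N; 1%N]); ((-1820)%Z, [:: 3%N; 0%N; 0%N; 0%N; 0%N; 1%N]); ((-564)%Z, [:: 0%N; 0%N; 0%N; 1%N; 1%N]); ((-2100)%Z, [:: 2%N; 1%N; 0%N; 0%N; 1%N]); ((-2100)%Z, [:: 2%N; 0%N; 1%N; 1%N]); ((-840)%Z, [:: 5%N; 0%N; 0%N; 1%N]); ((-1260)%Z, [:: 4%N; 1%N; 1%N]); ((-105)%Z, [:: 7%N; 1%N])], [:: ((840)%Z, [:: 1%N; 0%N; 0%N; 0%N; 0%N; 1%N]); ((4200)%Z, [:: 0%N; 1%N; 0%N; 0%N; 1%N]); ((-840)%Z, [:: 0%N; 0%N; 1%N; 1%N]); ((840)%Z, [:: 3%N; 0%N; 0%N; 1%N]); ((2520)%Z, [:: 2%N; 1%N; 1%N]); ((420)%Z, [:: 5%N; 1%N])], (0)%Z, (105)%Z);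
  ((24576)%Z, [:: 2%N; 0%N; 1%N; 0%N; 1%N], [:: ((23940)%Z, [:: 1%N; 0%N; 0%N; 0%N; 0%N; 0%N; 0%N; 1%N]); ((7500)%Z, [:: 0%N; 1%N; 0%N; 0%N; 0%N; 0%N; 1%N]); ((-2900)%Z, [:: 0%N; 0%N; 1%N; 0%N; 0%N; 1%N]); ((1300)%Z, [:: 3%N; 0%N; 0%N; 0%N; 0%N; 1%N]); ((7644)%Z, [:: 0%N; 0%N; 0%N; 1%N; 1%N]); ((7644)%Z, [:: 2%N; 1%N; 0%N; 0%N; 1%N]); ((1500)%Z, [:: 2%N; 0%N; 1%N; 1%N]); ((600)%Z, [:: 5%N; 0%N; 0%N; 1%N]); ((900)%Z, [:: 4%N; 1%N; 1%N]); ((75)%Z, [:: 7%N; 1%N])], [:: ((-31320)%Z, [:: 1%N; 0%N; 0%N; 0%N; 0%N; 1%N]); ((-15288)%Z, [:: 0%N; 1%N; 0%N; 0%N; 1%N]); ((600)%Z, [:: 0%N; 0%N; 1%N; 1%N]); ((-600)%Z, [:: 3%N; 0%N; 0%N; 1%N]); ((-1800)%Z, [:: 2%N; 1%N; 1%N]); ((-300)%Z, [:: 5%N; 1%N])], (0)%Z, (-75)%Z);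
  ((6144)%Z, [:: 1%N; 2%N; 0%N; 0%N; 1%N], [:: ((900)%Z, [:: 1%N; 0%N; 0%N; 0%N; 0%N; 0%N; 0%N; 1%N]); ((-180)%Z, [:: 0%N; 1%N; 0%N; 0%N; 0%N; 0%N; 1%N]); ((-340)%Z, [:: 0%N; 0%N; 1%N; 0%N; 0%N; 1%N]); ((1300)%Z, [:: 3%N; 0%N; 0%N; 0%N; 0%N; 1%N]); ((-36)%Z, [:: 0%N; 0%N; 0%N; 1%N; 1%N]); ((1500)%Z, [:: 2%N; 1%N; 0%N; 0%N; 1%N]); ((1500)%Z, [:: 2%N; 0%N; 1%N; 1%N]); ((600)%Z, [:: 5%N; 0%N; 0%N; 1%N]); ((900)%Z, [:: 4%N; 1%N; 1%N]); ((75)%Z, [:: 7%N; 1%N])], [:: ((-600)%Z, [:: 1%N; 0%N; 0%N; 0%N; 0%N; 1%N]); ((72)%Z, [:: 0%N; 1%N; 0%N; 0%N; 1%N]); ((600)%Z, [:: 0%N; 0%N; 1%N; 1%N]); ((-600)%Z, [:: 3%N; 0%N; 0%N; 1%N]); ((-1800)%Z, [:: 2%N; 1%N; 1%N]); ((-300)%Z, [:: 5%N; 1%N])], (0)%Z, (-75)%Z);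
  ((2048)%Z, [:: 5%N; 0%N; 0%N; 0%N; 1%N], [:: ((-7260)%Z, [:: 1%N; 0%N; 0%N; 0%N; 0%N; 0%N; 0%N; 1%N]); ((-1620)%Z, [:: 0%N; 1%N; 0%N; 0%N; 0%N; 0%N; 1%N]); ((2060)%Z, [:: 0%N; 0%N; 1%N; 0%N; 0%N; 1%N]); ((1460)%Z, [:: 3%N; 0%N; 0%N; 0%N; 0%N; 1%N]); ((-1860)%Z, [:: 0%N; 0%N; 0%N; 1%N; 1%N]); ((-1860)%Z, [:: 2%N; 1%N; 0%N; 0%N; 1%N]); ((1980)%Z, [:: 2%N; 0%N; 1%N; 1%N]); ((536)%Z, [:: 5%N; 0%N; 0%N; 1%N]); ((420)%Z, [:: 4%N; 1%N; 1%N]); ((35)%Z, [:: 7%N; 1%N])], [:: ((9960)%Z, [:: 1%N; 0%N; 0%N; 0%N; 0%N; 1%N]); ((3720)%Z, [:: 0%N; 1%N; 0%N; 0%N; 1%N]); ((-2280)%Z, [:: 0%N; 0%N; 1%N; 1%N]); ((-1560)%Z, [:: 3%N; 0%N; 0%N; 1%N]); ((-840)%Z, [:: 2%N; 1%N; 1%N]); ((-140)%Z, [:: 5%N; 1%N])], (0)%Z, (-35)%Z);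
  ((6144)%Z, [:: 2%N; 0%N; 0%N; 2%N], [:: ((-7644)%Z, [:: 1%N; 0%N; 0%N; 0%N; 0%N; 0%N; 0%N; 1%N]); ((-1748)%Z, [:: 0%N; 1%N; 0%N; 0%N; 0%N; 0%N; 1%N]); ((1932)%Z, [:: 0%N; 0%N; 1%N; 0%N; 0%N; 1%N]); ((52)%Z, [:: 3%N; 0%N; 0%N; 0%N; 0%N; 1%N]); ((-1988)%Z, [:: 0%N; 0%N; 0%N; 1%N; 1%N]); ((-1988)%Z, [:: 2%N; 1%N; 0%N; 0%N; 1%N]); ((1084)%Z, [:: 2%N; 0%N; 1%N; 1%N]); ((24)%Z, [:: 5%N; 0%N; 0%N; 1%N]); ((36)%Z, [:: 4%N; 1%N; 1%N]); ((3)%Z, [:: 7%N; 1%N])], [:: ((10216)%Z, [:: 1%N; 0%N; 0%N; 0%N; 0%N; 1%N]); ((3976)%Z, [:: 0%N; 1%N; 0%N; 0%N; 1%N]); ((-2024)%Z, [:: 0%N; 0%N; 1%N; 1%N]); ((-24)%Z, [:: 3%N; 0%N; 0%N; 1%N]); ((-72)%Z, [:: 2%N; 1%N; 1%N]); ((-12)%Z, [:: 5%N; 1%N])], (0)%Z, (-3)%Z);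
  ((3072)%Z, [:: 1%N; 1%N; 1%N; 1%N], [:: ((-252)%Z, [:: 1%N; 0%N; 0%N; 0%N; 0%N; 0%N; 0%N; 1%N]); ((-564)%Z, [:: 0%N; 1%N; 0%N; 0%N; 0%N; 0%N; 1%N]); ((-724)%Z, [:: 0%N; 0%N; 1%N; 0%N; 0%N; 1%N]); ((-364)%Z, [:: 3%N; 0%N; 0%N; 0%N; 0%N; 1%N]); ((-420)%Z, [:: 0%N; 0%N; 0%N; 1%N; 1%N]); ((-420)%Z, [:: 2%N; 1%N; 0%N; 0%N; 1%N]); ((-420)%Z, [:: 2%N; 0%N; 1%N; 1%N]); ((-168)%Z, [:: 5%N; 0%N; 0%N; 1%N]); ((-252)%Z, [:: 4%N; 1%N; 1%N]); ((-21)%Z, [:: 7%N; 1%N])], [:: ((168)%Z, [:: 1%N; 0%N; 0%N; 0%N; 0%N; 1%N]); ((840)%Z, [:: 0%N; 1%N; 0%N; 0%N; 1%N]); ((1368)%Z, [:: 0%N; 0%N; 1%N; 1%N]); ((168)%Z, [:: 3%N; 0%N; 0%N; 1%N]); ((504)%Z, [:: 2%N; 1%N; 1%N]); ((84)%Z, [:: 5%N; 1%N])], (0)%Z, (21)%Z);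
  ((1536)%Z, [:: 0%N; 3%N; 0%N; 1%N], [:: ((-396)%Z, [:: 1%N; 0%N; 0%N; 0%N; 0%N; 0%N; 0%N; 1%N]); ((1308)%Z, [:: 0%N; 1%N; 0%N; 0%N; 0%N; 0%N; 1%N]); ((1788)%Z, [:: 0%N; 0%N; 1%N; 0%N; 0%N; 1%N]); ((-572)%Z, [:: 3%N; 0%N; 0%N; 0%N; 0%N; 1%N]); ((876)%Z, [:: 0%N; 0%N; 0%N; 1%N; 1%N]); ((-660)%Z, [:: 2%N; 1%N; 0%N; 0%N; 1%N]); ((-660)%Z, [:: 2%N; 0%N; 1%N; 1%N]); ((768)%Z, [:: 1%N; 2%N; 0%N; 1%N]); ((-264)%Z, [:: 5%N; 0%N; 0%N; 1%N]); ((-396)%Z, [:: 4%N; 1%N; 1%N]); ((-33)%Z, [:: 7%N; 1%N])], [:: ((264)%Z, [:: 1%N; 0%N; 0%N; 0%N; 0%N; 1%N]); ((-1752)%Z, [:: 0%N; 1%N; 0%N; 0%N; 1%N]); ((-3336)%Z, [:: 0%N; 0%N; 1%N; 1%N]); ((264)%Z, [:: 3%N; 0%N; 0%N; 1%N]); ((792)%Z, [:: 2%N; 1%N; 1%N]); ((132)%Z, [:: 5%N; 1%N])], (0)%Z, (33)%Z);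
  ((512)%Z, [:: 4%N; 1%N; 0%N; 1%N], [:: ((1452)%Z, [:: 1%N; 0%N; 0%N; 0%N; 0%N; 0%N; 0%N; 1%N]); ((324)%Z, [:: 0%N; 1%N; 0%N; 0%N; 0%N; 0%N; 1%N]); ((-412)%Z, [:: 0%N; 0%N; 1%N; 0%N; 0%N; 1%N]); ((-292)%Z, [:: 3%N; 0%N; 0%N; 0%N; 0%N; 1%N]); ((372)%Z, [:: 0%N; 0%N; 0%N; 1%N; 1%N]); ((372)%Z, [:: 2%N; 1%N; 0%N; 0%N; 1%N]); ((-396)%Z, [:: 2%N; 0%N; 1%N; 1%N]); ((-56)%Z, [:: 5%N; 0%N; 0%N; 1%N]); ((-84)%Z, [:: 4%N; 1%N; 1%N]); ((-7)%Z, [:: 7%N; 1%N])], [:: ((-1992)%Z, [:: 1%N; 0%N; 0%N; 0%N; 0%N; 1%N]); ((-744)%Z, [:: 0%N; 1%N; 0%N; 0%N; 1%N]); ((456)%Z, [:: 0%N; 0%N; 1%N; 1%N]); ((312)%Z, [:: 3%N; 0%N; 0%N; 1%N]); ((168)%Z, [:: 2%N; 1%N; 1%N]); ((28)%Z, [:: 5%N; 1%N])], (0)%Z, (7)%Z);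
  ((6144)%Z, [:: 1%N; 0%N; 3%N], [:: ((1116)%Z, [:: 1%N; 0%N; 0%N; 0%N; 0%N; 0%N; 0%N; 1%N]); ((4692)%Z, [:: 0%N; 1%N; 0%N; 0%N; 0%N; 0%N; 1%N]); ((6132)%Z, [:: 0%N; 0%N; 1%N; 0%N; 0%N; 1%N]); ((1612)%Z, [:: 3%N; 0%N; 0%N; 0%N; 0%N; 1%N]); ((3396)%Z, [:: 0%N; 0%N; 0%N; 1%N; 1%N]); ((1860)%Z, [:: 2%N; 1%N; 0%N; 0%N; 1%N]); ((1860)%Z, [:: 2%N; 0%N; 1%N; 1%N]); ((768)%Z, [:: 1%N; 2%N; 0%N; 1%N]); ((744)%Z, [:: 5%N; 0%N; 0%N; 1%N]); ((1536)%Z, [:: 1%N; 1%N; 2%N]); ((-256)%Z, [:: 0%N; 3%N; 1%N]); ((1116)%Z, [:: 4%N; 1%N; 1%N]); ((93)%Z, [:: 7%N; 1%N])], [:: ((-744)%Z, [:: 1%N; 0%N; 0%N; 0%N; 0%N; 1%N]); ((-6792)%Z, [:: 0%N; 1%N; 0%N; 0%N; 1%N]); ((-11544)%Z, [:: 0%N; 0%N; 1%N; 1%N]); ((-744)%Z, [:: 3%N; 0%N; 0%N; 1%N]); ((-2232)%Z, [:: 2%N; 1%N; 1%N]); ((-372)%Z, [:: 5%N; 1%N])], (0)%Z, (-93)%Z);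
  ((3072)%Z, [:: 0%N; 2%N; 2%N], [:: ((396)%Z, [:: 1%N; 0%N; 0%N; 0%N; 0%N; 0%N; 0%N; 1%N]); ((-1308)%Z, [:: 0%N; 1%N; 0%N; 0%N; 0%N; 0%N; 1%N]); ((-1788)%Z, [:: 0%N; 0%N; 1%N; 0%N; 0%N; 1%N]); ((572)%Z, [:: 3%N; 0%N; 0%N; 0%N; 0%N; 1%N]); ((-876)%Z, [:: 0%N; 0%N; 0%N; 1%N; 1%N]); ((660)%Z, [:: 2%N; 1%N; 0%N; 0%N; 1%N]); ((660)%Z, [:: 2%N; 0%N; 1%N; 1%N]); ((-768)%Z, [:: 1%N; 2%N; 0%N; 1%N]); ((264)%Z, [:: 5%N; 0%N; 0%N; 1%N]); ((256)%Z, [:: 0%N; 3%N; 1%N]); ((396)%Z, [:: 4%N; 1%N; 1%N]); ((33)%Z, [:: 7%N; 1%N])], [:: ((-264)%Z, [:: 1%N; 0%N; 0%N; 0%N; 0%N; 1%N]); ((1752)%Z, [:: 0%N; 1%N; 0%N; 0%N; 1%N]); ((3336)%Z, [:: 0%N; 0%N; 1%N; 1%N]); ((-264)%Z, [:: 3%N; 0%N; 0%N; 1%N]); ((-792)%Z, [:: 2%N; 1%N; 1%N]); ((-132)%Z, [:: 5%N; 1%N])], (0)%Z, (-33)%Z);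
  ((96)%Z, [:: 4%N; 0%N; 2%N], [:: ((-324)%Z, [:: 1%N; 0%N; 0%N; 0%N; 0%N; 0%N; 0%N; 1%N]); ((-108)%Z, [:: 0%N; 1%N; 0%N; 0%N; 0%N; 0%N; 1%N]); ((20)%Z, [:: 0%N; 0%N; 1%N; 0%N; 0%N; 1%N]); ((-4)%Z, [:: 3%N; 0%N; 0%N; 0%N; 0%N; 1%N]); ((-108)%Z, [:: 0%N; 0%N; 0%N; 1%N; 1%N]); ((-108)%Z, [:: 2%N; 1%N; 0%N; 0%N; 1%N]); ((12)%Z, [:: 2%N; 0%N; 1%N; 1%N]); ((-24)%Z, [:: 5%N; 0%N; 0%N; 1%N]); ((-12)%Z, [:: 4%N; 1%N; 1%N]); ((-3)%Z, [:: 7%N; 1%N])], [:: ((408)%Z, [:: 1%N; 0%N; 0%N; 0%N; 0%N; 1%N]); ((216)%Z, [:: 0%N; 1%N; 0%N; 0%N; 1%N]); ((24)%Z, [:: 0%N; 0%N; 1%N; 1%N]); ((-48)%Z, [:: 3%N; 0%N; 0%N; 1%N]); ((-24)%Z, [:: 2%N; 1%N; 1%N]); ((12)%Z, [:: 5%N; 1%N])], (0)%Z, (3)%Z);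
  ((6144)%Z, [:: 3%N; 2%N; 1%N], [:: ((-2700)%Z, [:: 1%N; 0%N; 0%N; 0%N; 0%N; 0%N; 0%N; 1%N]); ((540)%Z, [:: 0%N; 1%N; 0%N; 0%N; 0%N; 0%N; 1%N]); ((3068)%Z, [:: 0%N; 0%N; 1%N; 0%N; 0%N; 1%N]); ((2756)%Z, [:: 3%N; 0%N; 0%N; 0%N; 0%N; 1%N]); ((108)%Z, [:: 0%N; 0%N; 0%N; 1%N; 1%N]); ((108)%Z, [:: 2%N; 1%N; 0%N; 0%N; 1%N]); ((3180)%Z, [:: 2%N; 0%N; 1%N; 1%N]); ((1272)%Z, [:: 5%N; 0%N; 0%N; 1%N]); ((1908)%Z, [:: 4%N; 1%N; 1%N]); ((159)%Z, [:: 7%N; 1%N])], [:: ((4872)%Z, [:: 1%N; 0%N; 0%N; 0%N; 0%N; 1%N]); ((-216)%Z, [:: 0%N; 1%N; 0%N; 0%N; 1%N]); ((-4872)%Z, [:: 0%N; 0%N; 1%N; 1%N]); ((-1272)%Z, [:: 3%N; 0%N; 0%N; 1%N]); ((-744)%Z, [:: 2%N; 1%N; 1%N]); ((-636)%Z, [:: 5%N; 1%N])], (0)%Z, (-159)%Z);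
  ((2048)%Z, [:: 7%N; 0%N; 1%N], [:: ((50820)%Z, [:: 1%N; 0%N; 0%N; 0%N; 0%N; 0%N; 0%N; 1%N]); ((11340)%Z, [:: 0%N; 1%N; 0%N; 0%N; 0%N; 0%N; 1%N]); ((-14420)%Z, [:: 0%N; 0%N; 1%N; 0%N; 0%N; 1%N]); ((-10220)%Z, [:: 3%N; 0%N; 0%N; 0%N; 0%N; 1%N]); ((13020)%Z, [:: 0%N; 0%N; 0%N; 1%N; 1%N]); ((13020)%Z, [:: 2%N; 1%N; 0%N; 0%N; 1%N]); ((-13860)%Z, [:: 2%N; 0%N; 1%N; 1%N]); ((-168)%Z, [:: 5%N; 0%N; 0%N; 1%N]); ((-2940)%Z, [:: 4%N; 1%N; 1%N]); ((267)%Z, [:: 7%N; 1%N])], [:: ((-69720)%Z, [:: 1%N; 0%N; 0%N; 0%N; 0%N; 1%N]); ((-26040)%Z, [:: 0%N; 1%N; 0%N; 0%N; 1%N]); ((15960)%Z, [:: 0%N; 0%N; 1%N; 1%N]); ((10920)%Z, [:: 3%N; 0%N; 0%N; 1%N]); ((5880)%Z, [:: 2%N; 1%N; 1%N]); ((-2604)%Z, [:: 5%N; 1%N])], (0)%Z, (245)%Z);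
  ((3072)%Z, [:: 2%N; 4%N], [:: ((2700)%Z, [:: 1%N; 0%N; 0%N; 0%N; 0%N; 0%N; 0%N; 1%N]); ((-540)%Z, [:: 0%N; 1%N; 0%N; 0%N; 0%N; 0%N; 1%N]); ((-3068)%Z, [:: 0%N; 0%N; 1%N; 0%N; 0%N; 1%N]); ((-2756)%Z, [:: 3%N; 0%N; 0%N; 0%N; 0%N; 1%N]); ((-108)%Z, [:: 0%N; 0%N; 0%N; 1%N; 1%N]); ((-108)%Z, [:: 2%N; 1%N; 0%N; 0%N; 1%N]); ((-3180)%Z, [:: 2%N; 0%N; 1%N; 1%N]); ((-1272)%Z, [:: 5%N; 0%N; 0%N; 1%N]); ((-1908)%Z, [:: 4%N; 1%N; 1%N]); ((512)%Z, [:: 3%N; 3%N]); ((-159)%Z, [:: 7%N; 1%N])], [:: ((-4872)%Z, [:: 1%N; 0%N; 0%N; 0%N; 0%N; 1%N]); ((216)%Z, [:: 0%N; 1%N; 0%N; 0%N; 1%N]); ((4872)%Z, [:: 0%N; 0%N; 1%N; 1%N]); ((1272)%Z, [:: 3%N; 0%N; 0%N; 1%N]); ((744)%Z, [:: 2%N; 1%N; 1%N]); ((636)%Z, [:: 5%N; 1%N])], (0)%Z, (159)%Z);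
  ((1024)%Z, [:: 6%N; 2%N], [:: ((-7260)%Z, [:: 1%N; 0%N; 0%N; 0%N; 0%N; 0%N; 0%N; 1%N]); ((-1620)%Z, [:: 0%N; 1%N; 0%N; 0%N; 0%N; 0%N; 1%N]); ((2060)%Z, [:: 0%N; 0%N; 1%N; 0%N; 0%N; 1%N]); ((1460)%Z, [:: 3%N; 0%N; 0%N; 0%N; 0%N; 1%N]); ((-1860)%Z, [:: 0%N; 0%N; 0%N; 1%N; 1%N]); ((-1860)%Z, [:: 2%N; 1%N; 0%N; 0%N; 1%N]); ((1980)%Z, [:: 2%N; 0%N; 1%N; 1%N]); ((24)%Z, [:: 5%N; 0%N; 0%N; 1%N]); ((420)%Z, [:: 4%N; 1%N; 1%N]); ((35)%Z, [:: 7%N; 1%N])], [:: ((9960)%Z, [:: 1%N; 0%N; 0%N; 0%N; 0%N; 1%N]); ((3720)%Z, [:: 0%N; 1%N; 0%N; 0%N; 1%N]); ((-2280)%Z, [:: 0%N; 0%N; 1%N; 1%N]); ((-1560)%Z, [:: 3%N; 0%N; 0%N; 1%N]); ((-840)%Z, [:: 2%N; 1%N; 1%N]); ((372)%Z, [:: 5%N; 1%N])], (0)%Z, (-35)%Z);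
  ((96)%Z, [:: 10%N], [:: ((-102060)%Z, [:: 1%N; 0%N; 0%N; 0%N; 0%N; 0%N; 0%N; 1%N]); ((-7620)%Z, [:: 0%N; 1%N; 0%N; 0%N; 0%N; 0%N; 1%N]); ((-46180)%Z, [:: 0%N; 0%N; 1%N; 0%N; 0%N; 1%N]); ((-4380)%Z, [:: 3%N; 0%N; 0%N; 0%N; 0%N; 1%N]); ((-25908)%Z, [:: 0%N; 0%N; 0%N; 1%N; 1%N]); ((-7860)%Z, [:: 2%N; 1%N; 0%N; 0%N; 1%N]); ((1260)%Z, [:: 2%N; 0%N; 1%N; 1%N]); ((-3840)%Z, [:: 1%N; 2%N; 0%N; 1%N]); ((2520)%Z, [:: 5%N; 0%N; 0%N; 1%N]); ((-7680)%Z, [:: 1%N; 1%N; 2%N]); ((1280)%Z, [:: 0%N; 3%N; 1%N]); ((5460)%Z, [:: 4%N; 1%N; 1%N]); ((135)%Z, [:: 7%N; 1%N])], [:: ((117960)%Z, [:: 1%N; 0%N; 0%N; 0%N; 0%N; 1%N]); ((31080)%Z, [:: 0%N; 1%N; 0%N; 0%N; 1%N]); ((50040)%Z, [:: 0%N; 0%N; 1%N; 1%N]); ((11880)%Z, [:: 3%N; 0%N; 0%N; 1%N]); ((4440)%Z, [:: 2%N; 1%N; 1%N]); ((2340)%Z, [:: 5%N; 1%N])], (96)%Z, (-1095)%Z)].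

Definition checkAll : bool :=
  let pp := Pp in let py := Py in
  all (check1 pp py) data && all (fun e => has (fun d => de d == e) data) E10 &&
  all (fun j => canon (ssrnat.iter j stepc P0)) (iota 0 5).

Lemma checkAll_ok : checkAll = true.
Proof. vm_compute. reflexivity. Qed.

Import Num.Theory.


Section Final.
Variable C : numClosedFieldType.
Local Notation M := (M1 C).
Local Notation interp := (@interp C).
Local Notation S := (@gens10 C).

Lemma span0 : in_span S 0.
Proof. by exists [::]; split => //; rewrite big_nil. Qed.

Lemma spanD u v : in_span S u -> in_span S v -> in_span S (u + v).
Proof.
move=> [s1 [h1 ->]] [s2 [h2 ->]]; exists (s1 ++ s2); split; last by rewrite big_cat.
by move=> p; rewrite mem_cat => /orP[/h1|/h2].
Qed.

Lemma spanZ c v : in_span S v -> in_span S (c *: v).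
Proof.
move=> [s [h ->]]; exists [seq (c * p.1, p.2) | p <- s]; split.
  by move=> p /mapP[q qs ->]; exact: (h q qs).
rewrite scaler_sumr big_map; apply: eq_bigr => p _; by rewrite scalerA.
Qed.

Lemma span_gen v : S v -> in_span S v.
Proof. by move=> h; exists [:: (1, v)]; split; [move=> p; rewrite inE => /eqP -> | rewrite big_seq1 scale1r]. Qed.

Definition good (P : cpoly) := in_span S (interp P).

Lemma good_nil : good [::].
Proof. by rewrite /good interp_nil; exact: span0. Qed.
Lemma good_cat P Q : good P -> good Q -> good (P ++ Q).
Proof. by rewrite /good interp_cat; exact: spanD. Qed.
Lemma good_scale z P : good P -> good (scalec z P).
Proof. by rewrite /good interp_scale; exact: spanZ. Qed.
Lemma good_flatten (T : eqType) (s : seq T) (f : T -> cpoly) :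
  (forall x, x \in s -> good (f x)) -> good (flatten [seq f x | x <- s]).
Proof.
elim: s => [|x s IH] h /=; first exact: good_nil.
apply: good_cat; first by apply: h; rewrite inE eqxx.
by apply: IH => y ys; apply: h; rewrite inE ys orbT.
Qed.

Lemma zr1 : zr C 1%Z = 1.
Proof. by rewrite /zr. Qed.

Lemma interp_single f : interp [:: (1%Z, f)] = << mono f >>.
Proof. by rewrite interp_cons interp_nil addr0 zr1 scale1r. Qed.

Lemma two_neq0 : (2%:R : C) != 0.
Proof. by rewrite pnatr_eq0. Qed.

Lemma Lop_canon n P : canon P ->
  Lop n (interp P) = (2%:R)^-1 *: interp (norm (Yc (wtbc P + absz (n + 1) + 2 + 1) 2 (n + 1) P)).
Proof.
move=> cp; rewrite /Lop interp_norm.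
by rewrite (@Ymono_canon C 2%N (n + 1) _ _ cp (erefl _)).
Qed.

Lemma inMplus_mono w f : condw w (1%Z, f) -> inMplus w (<< mono f >> : M).
Proof.
move=> /andP[/andP[_ /eqP wf] ev] k; rewrite msuppU1 in_fset1 => /eqP ->.
by rewrite wtm_mono lenm_mono wf.
Qed.

Lemma canon_single f : last 1%N f != 0%N -> canon [:: (1%Z, f)].
Proof. by move=> l; rewrite /canon /= l. Qed.

Lemma wtbc_single f : wtbc [:: (1%Z, f)] = wtc f.
Proof. by rewrite /wtbc /= maxn0. Qed.

Lemma good_gen1 f : condw 9 (1%Z, f) -> good (gen1 f).
Proof.
move=> cf; have cp : canon [:: (1%Z, f)] by apply: canon_single; case/andP: cf => /andP[].
have := Lop_canon (-1) cp; rewrite wtbc_single interp_single => E; rewrite /good.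
have -> : interp (gen1 f) = 2%:R *: Lop (-1) << mono f >>.
  rewrite E scalerA mulfV; last exact: two_neq0.
  by rewrite scale1r -/(gen1 f).
apply: spanZ; apply: span_gen; left; exists << mono f >>; split; last reflexivity.
exact: inMplus_mono.
Qed.

Lemma good_gen3 f : condw 7 (1%Z, f) -> good (gen3 f).
Proof.
move=> cf; have cp : canon [:: (1%Z, f)] by apply: canon_single; case/andP: cf => /andP[].
have := Lop_canon (-3) cp; rewrite wtbc_single interp_single => E; rewrite /good.
have -> : interp (gen3 f) = 2%:R *: Lop (-3) << mono f >>.
  rewrite E scalerA mulfV; last exact: two_neq0.
  by rewrite scale1r -/(gen3 f).
apply: spanZ; apply: span_gen; right; left; exists << mono f >>; split; last reflexivity.
exact: inMplus_mono.
Qed.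

Lemma h1pow4E : h1pow4 C = interp [:: (1%Z, [:: 4%N])].
Proof.
rewrite interp_single /h1pow4 /hv /=.
rewrite !exprS expr0 mulr1 !mulU; congr (<< _ >>).
apply/eqP/cmP => i; rewrite !mulcmE.
by rewrite onecmE addn0.
Qed.

Lemma good_Py : good Py.
Proof.
rewrite /good /Py interp_norm.
have cp : canon [:: (1%Z, [:: 4%N])] by [].
rewrite -(@Ymono_canon C 4%N (-3) _ _ cp (erefl _)) -h1pow4E.
by apply: span_gen; right; right; left.
Qed.

Lemma vac_interp : vac C = interp P0.
Proof. by rewrite /P0 interp_single. Qed.

Lemma iterL i : (forall j, (j < i)%N -> canon (ssrnat.iter j stepc P0)) ->
  ssrnat.iter i (Lop (-2)) (vac C) = ((2%:R : C)^-1)^+i *: interp (ssrnat.iter i stepc P0).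
Proof.
elim: i => [|i IH] h; first by rewrite /= expr0 scale1r vac_interp.
rewrite iterS IH; last by move=> j lt; apply: h; exact: ltnW.
rewrite LopZ; last by rewrite expf_neq0 // invr_eq0 two_neq0.
rewrite Lop_canon; last by apply: h.
by rewrite iterS /stepc scalerA exprS mulrC.
Qed.

Lemma good_Pp : (forall j, (j < 5)%N -> canon (ssrnat.iter j stepc P0)) -> good Pp.
Proof.
move=> h; rewrite /good /Pp.
have E := iterL h.
have nz : ((2%:R : C)^-1)^+5 != 0.
  by apply: expf_neq0; rewrite invr_eq0; exact: two_neq0.
have -> : interp (ssrnat.iter 5 stepc P0) = (((2%:R : C)^-1)^+5)^-1 *: L2pow5vac C.
  rewrite /L2pow5vac E scalerA mulVf; last exact: nz.
  rewrite scale1r; reflexivity.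
apply: spanZ; apply: span_gen; right; right; right; reflexivity.
Qed.

Lemma check1_ok pp py d : good pp -> good py -> check1 pp py d ->
  in_span S << mono (de d) >>.
Proof.
move=> gp gy /andP[/andP[/andP[nz a1] a3] nl].
have gc : good (combo pp py d).
  apply: good_cat; first by apply: good_flatten => t tin; apply: good_scale;
    apply: good_gen1; rewrite /condw /=; move/allP: a1 => /(_ t tin); rewrite /condw.
  apply: good_cat; first by apply: good_flatten => t tin; apply: good_scale;
    apply: good_gen3; rewrite /condw /=; move/allP: a3 => /(_ t tin); rewrite /condw.
  by apply: good_cat; apply: good_scale.
have E : interp (norm ((dD d, de d) :: scalec (-1)%Z (combo pp py d))) = 0.
  by move: nl; case: (norm _) => // _; rewrite interp_nil.
move: E; rewrite interp_norm interp_cons interp_scale /= => E.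
have zD : zr C (dD d) != 0 by rewrite zr_eq0.
have E2 : zr C (dD d) *: << mono (de d) >> = interp (combo pp py d).
  apply/eqP; rewrite -subr_eq0; apply/eqP; rewrite -[RHS]E; congr (_ + _).
  rewrite (_ : zr C (-1)%Z = -1); last first. by rewrite /zr. by rewrite scaleN1r.
have -> : << mono (de d) >> = (zr C (dD d))^-1 *: interp (combo pp py d).
  rewrite -E2 scalerA mulVf; last exact: zD.
  by rewrite scale1r.
exact: spanZ.
Qed.

Lemma E10_span e : e \in E10 -> in_span S << mono e >>.
Proof.
move=> eE; move: checkAll_ok; rewrite /checkAll => /andP[/andP[ac ah] ca].
have gp : good Pp.
  apply: good_Pp => j lt; move/allP: ca; apply; by rewrite mem_iota.
have [d din /eqP <-] := hasP (allP ah e eE).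
exact: check1_ok gp good_Py (allP ac d din).
Qed.

End Final.

Import Num.Theory.


Lemma E10_facts : (size E10 == 22%N) && uniq E10 &&
  all (fun e => condw 10 (1%Z, e)) E10.
Proof. vm_compute. reflexivity. Qed.

Definition eb (i : 'I_22) : seq nat := nth [::] E10 i.

Lemma eb_in i : eb i \in E10.
Proof.
case/andP: E10_facts => /andP[/eqP sz _] _.
by rewrite /eb mem_nth // sz.
Qed.

Lemma eb_cond i : condw 10 (1%Z, eb i).
Proof. by case/andP: E10_facts => _ /allP; apply; exact: eb_in. Qed.

Lemma mono_eb_inj i j : mono (eb i) = mono (eb j) -> i = j.
Proof.
move=> e; have := mono_inj _ _ e.
case/andP: (eb_cond i) => /andP[li _] _; case/andP: (eb_cond j) => /andP[lj _] _.
move=> /(_ li lj) ee; apply: val_inj => /=.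
case/andP: E10_facts => /andP[/eqP sz u] _.
by apply/eqP; rewrite -(nth_uniq [::] _ _ u) ?sz //; apply/eqP.
Qed.

Section Main.
Variable C : numClosedFieldType.
Local Notation M := (M1 C).

Definition bas (i : 'I_22) : M := << mono (eb i) >>.

Lemma bas_in i : inMplus 10 (bas i).
Proof. exact: inMplus_mono (eb_cond i). Qed.

Lemma coef_sum (c : 'I_22 -> C) k :
  (\sum_i c i *: bas i)@_k = \sum_i c i * (mono (eb i) == k)%:R.
Proof.
rewrite raddf_sum; apply: eq_bigr => i _ /=.
by rewrite mcoeffZ cU.
Qed.

Lemma bas_indep (c : 'I_22 -> C) : \sum_i c i *: bas i = 0 -> forall i, c i = 0.
Proof.
move=> H j; have := congr1 (mcoeff (mono (eb j))) H.
rewrite coef_sum mcoeff0 (bigD1 j) //= eqxx mulr1 big1 ?addr0 //.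
move=> i ij; case: eqP => [/mono_eb_inj e|_]; last by rewrite mulr0.
by move: ij; rewrite e eqxx.
Qed.

Lemma bas_span v : inMplus 10 v -> v = \sum_i v@_(mono (eb i)) *: bas i.
Proof.
move=> hv; apply/malgP => k; rewrite coef_sum.
case: (boolP (k \in msupp v)) => kin.
  have [w l] := hv k kin.
  have [e eE ke] := wt10_mono w l.
  have ix : (index e E10 < 22)%N.
    by case/andP: E10_facts => /andP[/eqP sz _] _; rewrite -sz index_mem.
  pose j := Ordinal ix.
  have ej : eb j = e by rewrite /eb /= nth_index.
  rewrite (bigD1 j) //= ej -ke eqxx mulr1 big1 ?addr0 //.
  move=> i ij; case: eqP => [ek|_]; last by rewrite mulr0.
  by move: ij; rewrite (mono_eb_inj (i := i) (j := j)) ?eqxx // ej -ke.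
rewrite mcoeff_outdom // big1 // => i _.
case: eqP => [->|_]; last by rewrite mulr0.
by rewrite mcoeff_outdom // mul0r.
Qed.

Lemma hom_iterL i : hom (2 * i)%:Z false (ssrnat.iter i (Lop (-2)) (vac C)).
Proof.
elim: i => [|i IH]; first exact: hom_vac.
rewrite iterS; have := hom_Lop (n := -2) IH.
by rewrite (_ : (2 * i)%:Z - (-2) = (2 * i.+1)%:Z) //; lia.
Qed.

Lemma gens_in (v : M) : gens10 v -> inMplus 10 v.
Proof.
case=> [[w [hw ->]]|[[w [hw ->]]|[->| ->]]]; apply/inMplus_hom.
- have := hom_Lop (n := -1) (proj1 (inMplus_hom 9 w) hw).
  by rewrite (_ : 9%:Z - (-1) = 10%:Z).
- have := hom_Lop (n := -3) (proj1 (inMplus_hom 7 w) hw).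
  by rewrite (_ : 7%:Z - (-3) = 10%:Z).
- rewrite h1pow4E interp_single.
  have := hom_Ymono (ns := [:: 1%N; 1%N; 1%N; 1%N]) (n := -3) (@homU C (mono [:: 4%N])).
  by rewrite wtm_mono lenm_mono.
- exact: (hom_iterL (i:=5)).
Qed.

End Main.

Unset Implicit Arguments.

Theorem lemma4p3 (C : numClosedFieldType) :
  (* dim M(1)^+_10 = 22 *)
  (exists b : 'I_22 -> M1 C,
      (forall i, @inMplus C 10 (b i)) /\
      (forall c : 'I_22 -> C, \sum_i c i *: b i = 0 -> forall i, c i = 0) /\
      (forall v, @inMplus C 10 v -> exists c : 'I_22 -> C, v = \sum_i c i *: b i)) /\
  (* the listed vectors lie in M(1)^+_10 ... *)
  (forall v, @gens10 C v -> @inMplus C 10 v) /\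
  (* ... and span it *)
  (forall v, @inMplus C 10 v -> in_span (@gens10 C) v).
Proof.
split.
  exists (@bas C); split; first exact: bas_in.
  split; first exact: bas_indep.
  by move=> v hv; exists (fun i => v@_(mono (eb i))); exact: bas_span.
split; first exact: gens_in.
move=> v hv; rewrite (bas_span hv).
elim/big_ind: _ => //; first exact: span0.
  by move=> x y; exact: spanD.
by move=> i _; apply: spanZ; apply: E10_span; exact: eb_in.
Qed.
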